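(* Suppose $n_1,n_2,n_3,\dots$ is a sequence of positive integers with $\lim_{i\to\infty}n_i=\infty$. Then $\bigcap_{i=1}^\infty I\Lambda_{n_i}=0$.
   Context: $I\Lambda_n$ is the ideal of $\mathbb{Z}[x_1,\dots,x_n]$ generated by the polynomials that are symmetric in $x_1,\dots,x_n$ and have zero constant term; all these ideals are regarded as subsets of $\mathbb{Z}[x_1,x_2,\dots]$. *)

(* Defs.v *)
From HB Require Import structures.
From mathcomp Require Import all_boot all_order all_algebra.
From mathcomp Require Import mpoly.
Set Implicit Arguments. Unset Strict Implicit. Unset Printing Implicit Defensive.
Import Order.TTheory GRing.Theory Num.Theory.
Local Open Scope ring_scope.

(* Variables x_1, x_2, ... are indexed from 0: x_(i+1) is 'X_i.
   A polynomial of Z[x_1,x_2,...] involving only x_1..x_N is an element of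
   {mpoly int[N]}; the natural inclusion Z[x_1..x_n] -> Z[x_1..x_m] (n <= m)
   is [widen_mpoly]. *)
Definition widen_mpoly (n m : nat) (H : (n <= m)%N) (p : {mpoly int[n]})
  : {mpoly int[m]} :=
  comp_mpoly [tuple ('X_(widen_ord H i) : {mpoly int[m]}) | i < n] p.

(* Two polynomials (with different numbers of variables) are equal as
   elements of Z[x_1,x_2,...]: compare them in Z[x_1..x_(N+n)]. *)
Definition same_poly (N n : nat) (p : {mpoly int[N]}) (q : {mpoly int[n]}) :=
  widen_mpoly (leq_addr n N) p = widen_mpoly (leq_addl N n) q.

Definition ILambda (n : nat) (q : {mpoly int[n]}) : Prop :=
  exists (k : nat) (c g : 'I_k -> {mpoly int[n]}),
    (forall j, g j \is symmetric /\ (g j)@_(0%MM) = 0) /\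
    q = \sum_(j < k) c j * g j.

Definition in_ILambda (n N : nat) (p : {mpoly int[N]}) : Prop :=
  exists q : {mpoly int[n]}, ILambda q /\ same_poly p q.

(* Main.v *)
Require Import Defs.
From HB Require Import structures.
From mathcomp Require Import all_boot all_order all_algebra all_field.
From mathcomp Require Import mpoly zify perm fingroup.
Set Implicit Arguments. Unset Strict Implicit. Unset Printing Implicit Defensive.
Import Order.TTheory GRing.Theory Num.Theory.
Local Open Scope ring_scope.

Lemma mmap_morph n (R : nzRingType) (S T : comNzRingType) (f : R -> S) (h : 'I_n -> S)
  (F : {rmorphism S -> T}) (f' : R -> T) (h' : 'I_n -> T) :
  (forall c, F (f c) = f' c) -> (forall i, F (h i) = h' i) ->
  forall p : {mpoly R[n]}, F (mmap f h p) = mmap f' h' p.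
Proof.
move=> Hf Hh p; rewrite /mmap rmorph_sum; apply: eq_bigr => m _.
rewrite rmorphM Hf; congr (_ * _); rewrite /mmap1 rmorph_prod.
by apply: eq_bigr => i _; rewrite rmorphXn Hh.
Qed.

Lemma mmap_ext n (R S : nzRingType) (f f' : R -> S) (h h' : 'I_n -> S) :
  f =1 f' -> h =1 h' -> forall p : {mpoly R[n]}, mmap f h p = mmap f' h' p.
Proof.
move=> Hf Hh p; rewrite /mmap; apply: eq_bigr => m _.
by rewrite Hf (mmap1_eq _ Hh).
Qed.

Lemma mmapXU n (R : nzRingType) (S : comNzRingType) (f : {rmorphism R -> S}) (h : 'I_n -> S) i :
  mmap f h 'X_i = h i.
Proof. by rewrite mmapX mmap1U. Qed.

Lemma mmap_h0 n (R : nzRingType) (S : comNzRingType) (f : {rmorphism R -> S}) (p : {mpoly R[n]}) :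
  p@_0%MM = 0 -> mmap f (fun _ => 0) p = 0.
Proof.
move=> H0; rewrite /mmap big1 // => m _.
have [->|nz] := eqVneq m 0%MM; first by rewrite H0 rmorph0 mul0r.
have [i Hi] : exists i, m i != 0%N.
  apply/existsP; apply: contraR nz; rewrite negb_exists => /forallP Hm.
  by apply/eqP/mnmP => i; rewrite mnm0E; move: (Hm i); rewrite negbK => /eqP.
by rewrite /mmap1 (bigD1 i) //= expr0n (negbTE Hi) mul0r mulr0.
Qed.

Section Main.
Variables (N m' : nat) (w : algC).
Hypothesis prim : (m'.+1).-primitive_root w.
Local Notation m := m'.+1.
Local Notation M := (N * m)%N.

Definition Xn (k : nat) : {mpoly algC[N]} := if insub k is Some i then 'X_i else 0.
Definition V (j : nat) : {mpoly algC[N]} :=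
  if (j < M)%N then w ^+ (j %/ N) *: Xn (j %% N) else 0.
Definition E k (q : {mpoly int[k]}) : {mpoly algC[N]} :=
  mmap intr (fun i : 'I_k => V i) q.
Definition D (r : {mpoly algC[N]}) : {mpoly algC[N]} :=
  mmap (@mpolyC N algC) (fun i => w *: 'X_i) r.

Lemma Xn_val (i : 'I_N) : Xn i = 'X_i.
Proof. by rewrite /Xn valK. Qed.

Definition sig (j : nat) := if (j + N < M)%N then (j + N)%N
  else if (j < M)%N then (j + N - M)%N else j.
Definition tau (j : nat) := if (j < M)%N then (if (N <= j)%N then (j - N)%N else (j + M - N)%N) else j.

Lemma MN : M = (N + N * m')%N.
Proof. by rewrite mulnS. Qed.

Lemma tauK : cancel sig tau.
Proof.
move=> j; rewrite /sig /tau MN; set K := (N * m')%N.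
by repeat case: ifP; lia.
Qed.

Lemma sig_lt k j : (M <= k)%N -> (j < k)%N -> (sig j < k)%N.
Proof. rewrite /sig MN; set K := (N * m')%N => ? ?; repeat case: ifP; lia. Qed.

Lemma V_sig j : V (sig j) = w *: V j.
Proof.
rewrite /sig.
case: (boolP (j + N < M)%N) => H1.
  have Npos : (0 < N)%N by move: H1; rewrite MN; lia.
  rewrite /V H1 ifT; last by lia.
  have -> : (j + N = 1 * N + j)%N by lia.
  by rewrite divnMDl // modnMDl scalerA exprS.
case: (boolP (j < M)%N) => H2; last by rewrite /V (negbTE H2) scaler0.
have Npos : (0 < N)%N by move: H2; rewrite MN; lia.
have Hr : (j + N - M < N)%N by move: H2; rewrite MN; lia.
have Hj : j = (m' * N + (j + N - M))%N by move: H1 H2; rewrite MN mulnC; lia.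
rewrite /V H2 ifT; last by move: Hr; rewrite MN; lia.
rewrite [in RHS]Hj divnMDl // modnMDl divn_small // modn_small // addn0.
by rewrite scalerA -exprS (prim_expr_order prim) expr0.
Qed.

Lemma D_scale c x : D (c *: x) = c *: D x.
Proof. by rewrite /D -mul_mpolyC rmorphM /= mmapC mul_mpolyC. Qed.

Lemma D_Xn t : D (Xn t) = w *: Xn t.
Proof.
rewrite /Xn; case: insub => [a|]; last by rewrite /D rmorph0 scaler0.
by rewrite /D mmapXU.
Qed.

Section Perm.
Variables (k : nat) (Hk : (M <= k)%N).
Definition sigo (j : 'I_k) : 'I_k := Ordinal (sig_lt Hk (ltn_ord j)).
Lemma sigo_inj : injective sigo.
Proof. by move=> a b /(congr1 val) /= /(can_inj tauK) /val_inj. Qed.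
Definition sp : {perm 'I_k} := perm sigo_inj.

Lemma E_sym (g : {mpoly int[k]}) : g \is symmetric -> D (E g) = E g.
Proof.
move=> /issymP Hs.
rewrite -{2}(Hs sp) /E /msym /D.
rewrite (mmap_morph (F := mmap (@mpolyC N algC) (fun i => w *: 'X_i))
   (f' := intr) (h' := fun i : 'I_k => w *: V i)); last 2 first.
- by move=> c; rewrite rmorph_int.
- move=> i; rewrite /V; case: ifP => _; last by rewrite rmorph0 scaler0.
  by rewrite /= -/(D _) D_scale D_Xn scalerA mulrC -scalerA.
rewrite (mmap_morph (f' := intr) (h' := fun i : 'I_k => V (sp i))) //.
- by apply: mmap_ext => // i; rewrite permE /= V_sig.
- by move=> c; rewrite /= mmapC.
- by move=> i; rewrite /= mmapXU.
Qed.
End Perm.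

Lemma D_coef r b : (D r)@_b = w ^+ (mdeg b) * r@_b.
Proof.
have HX c : D 'X_[c] = w ^+ (mdeg c) *: 'X_[c].
  rewrite /D mmapX /mmap1 mpolyXE_id mdegE -prodrXr -scaler_prod.
  by apply: eq_bigr => i _; rewrite exprZn.
have H0 : r@_b = \sum_(c <- msupp r) r@_c * (c == b)%:R.
  by rewrite {1}[r]mpolyE raddf_sum /=; apply: eq_bigr => c _; rewrite mcoeffZ mcoeffX.
rewrite H0 mulr_sumr {1}[r]mpolyE /D rmorph_sum /= raddf_sum /=; apply: eq_bigr => c _.
rewrite -/(D _) D_scale HX scalerA mcoeffZ mcoeffX.
by case: eqP => [->|]; rewrite ?mulr0 ?mulr1 // mulrC.
Qed.

Definition inJ (r : {mpoly algC[N]}) := forall b, (mdeg b < m)%N -> r@_b = 0.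

Lemma inJ_mul c r : inJ r -> inJ (c * r).
Proof.
move=> Hr b Hb; rewrite mcoeffM big1 // => kk /eqP Hkk.
have E1 := congr1 mdeg Hkk; rewrite mdegD in E1.
rewrite Hr ?mulr0 //; lia.
Qed.

Lemma inJ_sum I (s : seq I) (F : I -> {mpoly algC[N]}) :
  (forall i, inJ (F i)) -> inJ (\sum_(i <- s) F i).
Proof.
move=> H b Hb; rewrite raddf_sum big1 // => i _; exact: H.
Qed.

Lemma inJ_E k (g : {mpoly int[k]}) : (M <= k)%N -> g \is symmetric -> g@_0%MM = 0 -> inJ (E g).
Proof.
move=> Hk Hs H0 b Hb.
have Hc := D_coef (E g) b; rewrite E_sym // in Hc.
have [/eqP d0|dpos] := posnP (mdeg b).
  rewrite mdeg_eq0 in d0; rewrite (eqP d0).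
  rewrite /E (mmap_morph (F := mcoeff 0%MM) (f' := intr) (h' := fun _ => 0)).
  - exact: mmap_h0.
  - by move=> c; rewrite rmorph_int.
  - move=> i; rewrite /V /=; case: ifP => _; first last.
      exact: mcoeff0.
    rewrite mcoeffZ /Xn; case: insub => [a|]; last by rewrite mcoeff0 mulr0.
    by rewrite mcoeffX -mdeg_eq0 mdeg1 mulr0.
have Hw : w ^+ mdeg b != 1.
  rewrite -(prim_order_dvd prim); apply/negP => /(dvdn_leq dpos); lia.
have : (w ^+ mdeg b - 1) * (E g)@_b = 0 by rewrite mulrBl mul1r -Hc subrr.
by move/eqP; rewrite mulf_eq0 subr_eq0 (negbTE Hw) => /eqP.
Qed.

Lemma inJ_IL k (q : {mpoly int[k]}) : (M <= k)%N -> ILambda q -> inJ (E q).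
Proof.
move=> Hk [kk [c [g [Hg ->]]]].
rewrite /E rmorph_sum /=; apply: inJ_sum => j.
rewrite rmorphM /=; apply: inJ_mul; rewrite -/(E _).
by case: (Hg j) => ? ?; exact: inJ_E.
Qed.

Lemma E_widen k k' (H : (k <= k')%N) (q : {mpoly int[k]}) : E (widen_mpoly H q) = E q.
Proof.
rewrite /widen_mpoly /comp_mpoly /E (mmap_morph (f' := intr) (h' := fun i : 'I_k => V i)) //.
- by move=> c; rewrite /= mmapC.
- by move=> i; rewrite /= tnth_mktuple mmapXU.
Qed.

Lemma E_p (p : {mpoly int[N]}) : E p = map_mpoly intr p.
Proof.
rewrite /E /map_mpoly; apply: mmap_ext => [c|i] /=; first by rewrite rmorph_int.
have HiN := ltn_ord i.
rewrite /V ifT; last by apply: leq_trans HiN _; rewrite leq_pmulr.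
by rewrite divn_small // modn_small // expr0 scale1r Xn_val.
Qed.

End Main.

Unset Implicit Arguments.
Set Strict Implicit.

Theorem lemma3p3 (ns : nat -> nat)
  (hpos : forall i, (0 < ns i)%N)
  (hlim : forall M : nat, exists I : nat, forall i, (I <= i)%N -> (M <= ns i)%N)
  (N : nat) (p : {mpoly int[N]}) :
  (forall i, in_ILambda (ns i) p) -> p = 0.
Proof.
move=> H.
set m' := msize p.
have [w prim] := C_prim_root_exists (ltn0Sn m').
have [I HI] := hlim (N * m'.+1)%N.
have HM := HI I (leqnn I).
have [q [Hq Hsame]] := H I.
have HJ := inJ_IL prim HM Hq.
have := congr1 (@E N m' w (N + ns I)%N) Hsame.
rewrite !E_widen E_p // => HE.
rewrite -HE in HJ.
apply/mpolyP => b; rewrite mcoeff0.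
case: (boolP (b \in msupp p)) => Hb; last exact: memN_msupp_eq0.
have Hlt := msize_mdeg_lt Hb.
have := HJ b (ltnW Hlt).
rewrite mcoeff_map_mpoly => /eqP; rewrite intr_eq0 => /eqP.
done.
Qed.
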